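(* Let $m$ be an element of the monoid $M$. Then $m$ is the skeleton of some finite $(3+1)$-free poset if and only if (i) every representative $w\in\Sigma^*$ of $m$ starts with the letter $c_1$ or $t_{12}$, and (ii) no representative $w\in\Sigma^*$ of $m$ contains a factor (consecutive pair of letters) of the form $c_ic_i$ for some $i\ge1$.
   Context: A poset $P$ is $(3+1)$-free if there are no $a,b,c,d\in P$ with $a<b<c$ and $d$ incomparable to each of $a,b,c$. For $a\in P$ let $D_a=\{x\in P:x<a\}$, $U_a=\{x\in P:x>a\}$. Write $a\mathrel{\top}b$ if neither of $D_a,D_b$ contains the other, $a\mathrel{\bot}b$ if neither of $U_a,U_b$ contains the other, and $a\approx b$ if $D_a=D_b$ and $U_a=U_b$. A top of a tangle is a subset $A\subseteq P$ with $|A|\ge2$ that is a connected component of the graph on $P$ with edges $\{a,b\}$ for $a\mathrel{\top}b$; a bottom of a tangle is defined likewise using $\bot$. A top $A$ and bottom $B$ are matched if there are distinct $a_1,a_2\in A$, $b_1,b_2\in B$ with $b_1<a_1$, $b_2<a_2$ and the pairs $\{a_1,a_2\},\{b_1,b_2\},\{b_1,a_2\},\{b_2,a_1\}$ incomparable; in a $(3+1)$-free poset this is a perfect matching. A tangle is a matched pair $(A,B)$, identified with $A\cup B$; a clone set is an equivalence class of $\approx$ on the vertices in no tangle; clone sets and tangles are the parts of $P$. Levels: $L_1$ = minimal elements of $P$, $L_{k+1}$ = minimal elements of $P\setminus(L_1\cup\dots\cup L_k)$, $\ell(a)=k$ if $a\in L_k$; each clone set lies in one level, each tangle in $L_i\cup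 L_{i+1}$ for some $i$. A compatible listing is an ordering $(X_1,\dots,X_m)$ of all parts such that for $a\in X_i$, $b\in X_j$, $i\ne j$: $a<b$ iff $\ell(a)\le\ell(b)-2$, or $\ell(a)=\ell(b)-1$ and $i<j$ (compatible listings exist). Let $\Sigma=\{c_1,c_2,\dots\}\cup\{t_{12},t_{23},\dots,t_{i\,i+1},\dots\}$, $\Sigma^*$ the free monoid on $\Sigma$, and $M$ the quotient of $\Sigma^*$ by the commutation relations $c_ic_j=c_jc_i$ if $|i-j|\ge2$; $c_it_{j\,j+1}=t_{j\,j+1}c_i$ if $i\le j-2$ or $i\ge j+3$; $t_{i\,i+1}t_{j\,j+1}=t_{j\,j+1}t_{i\,i+1}$ if $|i-j|\ge3$. A representative of $m\in M$ is a word in $\Sigma^*$ mapping to $m$. The word of a compatible listing replaces each clone set at level $i$ by $c_i$ and each tangle in levels $\{i,i+1\}$ by $t_{i\,i+1}$; all compatible listings of $P$ give words with the same image in $M$, the skeleton of $P$. *)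

(* Defs.v *)
From Stdlib Require Import Relation_Operators.
From mathcomp Require Import all_boot.
Set Implicit Arguments. Unset Strict Implicit. Unset Printing Implicit Defensive.

(* Lc i = c_i, Lt i = t_{i,i+1}; genuine letters have index i >= 1. *)
Inductive letter := Lc of nat | Lt of nat.

Definition letter_index (a : letter) : nat := match a with Lc i => i | Lt i => i end.
Definition valid_letter (a : letter) : bool := 1 <= letter_index a.

Definition commute_letters (a b : letter) : bool :=
  match a, b with
  | Lc i, Lc j => (i + 2 <= j) || (j + 2 <= i)
  | Lc i, Lt j => (i + 2 <= j) || (j + 3 <= i)
  | Lt j, Lc i => (i + 2 <= j) || (j + 3 <= i)
  | Lt i, Lt j => (i + 3 <= j) || (j + 3 <= i)
  end.

Definition swap_step (w w' : seq letter) : Prop :=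
  exists (u v : seq letter) (a b : letter),
    commute_letters a b /\ w = u ++ a :: b :: v /\ w' = u ++ b :: a :: v.

(* two words have the same image in M (congruence generated by the relations) *)
Definition word_equiv : seq letter -> seq letter -> Prop :=
  clos_refl_sym_trans (seq letter) swap_step.

Definition starts_c1_or_t12 (w : seq letter) : Prop :=
  match w with
  | Lc 1 :: _ => True
  | Lt 1 :: _ => True
  | _ => False
  end.

Definition has_factor_cici (w : seq letter) : Prop :=
  exists (u v : seq letter) (i : nat), w = u ++ Lc i :: Lc i :: v.

Section Poset.
Variables (T : finType) (lt : rel T).

Definition strict_order : Prop :=
  (forall x, ~~ lt x x) /\ (forall x y z, lt x y -> lt y z -> lt x z).

Definition incomp (a b : T) : bool := [&& a != b, ~~ lt a b & ~~ lt b a].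

Definition free31 : Prop :=
  ~ exists a b c d : T,
      [/\ lt a b, lt b c, incomp d a, incomp d b & incomp d c].

Definition Dn (a : T) : {set T} := [set x | lt x a].
Definition Up (a : T) : {set T} := [set x | lt a x].

Definition top_rel (a b : T) : bool := ~~ (Dn a \subset Dn b) && ~~ (Dn b \subset Dn a).
Definition bot_rel (a b : T) : bool := ~~ (Up a \subset Up b) && ~~ (Up b \subset Up a).
Definition clone (a b : T) : bool := (Dn a == Dn b) && (Up a == Up b).

Definition is_top (A : {set T}) : bool :=
  (1 < #|A|) && [exists a, A == [set x | connect top_rel a x]].
Definition is_bot (B : {set T}) : bool :=
  (1 < #|B|) && [exists b, B == [set x | connect bot_rel b x]].

Definition matched (A B : {set T}) : bool :=
  [exists a1, exists a2, exists b1, exists b2,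
    [&& a1 \in A, a2 \in A, b1 \in B, b2 \in B, a1 != a2, b1 != b2,
        lt b1 a1, lt b2 a2, incomp a1 a2, incomp b1 b2, incomp b1 a2 & incomp b2 a1]].

(* a tangle, identified with A :|: B *)
Definition is_tangle (X : {set T}) : bool :=
  [exists A : {set T}, exists B : {set T},
     [&& is_top A, is_bot B, matched A B & X == A :|: B]].

Definition in_tangle (x : T) : bool := [exists X, is_tangle X && (x \in X)].

Definition is_clone_set (X : {set T}) : bool :=
  [exists x, ~~ in_tangle x && (X == [set y | ~~ in_tangle y && clone x y])].

Definition is_part (X : {set T}) : bool := is_tangle X || is_clone_set X.

(* levels: used k = L_1 u ... u L_k *)
Fixpoint used (k : nat) : {set T} :=
  match k with
  | 0 => set0
  | k'.+1 => let R := ~: used k' in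
             used k' :|: [set x in R | [forall y in R, ~~ lt y x]]
  end.

Definition Lev (k : nat) : {set T} := used k :\: used k.-1.

Definition level (a : T) : nat := find (fun k => a \in used k) (iota 0 #|T|.+1).

(* the letter of a part: c_i for a clone set at level i,
   t_{i,i+1} for a tangle in levels {i,i+1} (i = least level in the part) *)
Definition part_letter (X : {set T}) : letter :=
  let i := \big[minn/#|T|.+1]_(x in X) level x in
  if is_tangle X then Lt i else Lc i.

Definition compatible_listing (s : seq {set T}) : Prop :=
  [/\ uniq s,
      (forall X, (X \in s) = is_part X) &
      forall (i j : nat) (a b : T), i < size s -> j < size s -> i != j ->
        a \in nth set0 s i -> b \in nth set0 s j ->
        lt a b = (level a + 2 <= level b) || ((level a + 1 == level b) && (i < j))].

(* the skeleton of the poset is the element of M represented by w *)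
Definition skeleton_is (w : seq letter) : Prop :=
  exists s, compatible_listing s /\ word_equiv (map part_letter s) w.

End Poset.

(* Main.v *)
Require Import Defs.
From Stdlib Require Import Relation_Operators.
From mathcomp Require Import all_boot.
From mathcomp Require Import zify.
From Stdlib Require Import Lia.
Set Implicit Arguments. Unset Strict Implicit. Unset Printing Implicit Defensive.

Section Levels.
Variables (T : finType) (lt : rel T).
Hypothesis Hso : strict_order lt.

Lemma lt_irr x : lt x x = false.
Proof. by case: Hso => H _; apply/negbTE/H. Qed.
Lemma lt_trans x y z : lt x y -> lt y z -> lt x z.
Proof. by case: Hso => _ H; apply: H. Qed.

Lemma usedS k x : (x \in used lt k.+1) = (x \in used lt k) || [forall y, lt y x ==> (y \in used lt k)].
Proof.
rewrite /= inE; case: (boolP (x \in used lt k)) => //= Hx.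
rewrite inE in_setC Hx /=; apply/forall_inP/forallP => H y.
- apply/implyP => Hy; apply/negPn/negP => Hn; by move: (H y); rewrite in_setC Hn Hy => /(_ isT).
- rewrite in_setC => Hy; apply/negP => Hl; by move: (H y); rewrite Hl (negbTE Hy).
Qed.

Lemma used_mono k m : k <= m -> used lt k \subset used lt m.
Proof.
move=> /subnK <-; elim: (m - k) => [|d IH]; first by rewrite add0n.
apply: subset_trans IH _; rewrite addSn; apply/subsetP => x Hx; by rewrite usedS Hx.
Qed.

Lemma minimal_exists (S : {set T}) : S != set0 -> exists2 x, x \in S & forall y, y \in S -> ~~ lt y x.
Proof.
case/set0Pn => x0 Hx0.
pose x := [arg min_(x < x0 in S) #|Dn lt x|].
case: (@arg_minnP _ x0 (mem S) (fun x => #|Dn lt x|) Hx0) => x1 Hx1 Hmin.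
exists x1 => // y Hy; apply/negP => Hyx.
have := Hmin y Hy; rewrite leqNgt => /negP; apply.
apply: proper_card; rewrite properE; apply/andP; split.
- apply/subsetP => z; rewrite !inE => Hz; exact: lt_trans Hz Hyx.
- apply/subsetPn; exists y; by rewrite !inE ?lt_irr.
Qed.

Lemma used_card k : minn k #|T| <= #|used lt k|.
Proof.
elim: k => [|k IH]; first by rewrite min0n.
case: (boolP (used lt k == setT)) => [/eqP He|Hne].
  have : used lt k \subset used lt k.+1 by apply: used_mono.
  rewrite He subTset => /eqP ->; rewrite cardsT; exact: geq_minr.
have : ~: used lt k != set0.
  apply/negP => /eqP H; move/negP: Hne; apply; by rewrite -[used lt k]setCK H setC0.
case/minimal_exists => x; rewrite in_setC => Hx Hmin.
have Hsub : used lt k \proper used lt k.+1.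
  rewrite properE used_mono //=; apply/subsetPn; exists x => //.
  rewrite usedS; apply/orP; right; apply/forallP => y; apply/implyP => Hy.
  apply/negPn/negP => Hn; move: (Hmin y); by rewrite in_setC Hn Hy => /(_ isT).
have := proper_card Hsub; have := max_card (mem (used lt k.+1)); lia.
Qed.

Lemma used_all x : x \in used lt #|T|.
Proof.
have := used_card #|T|; rewrite minnn => H.
have : used lt #|T| = setT by apply/eqP; rewrite eqEcard subsetT cardsT H.
by move->; rewrite inE.
Qed.

Lemma used0 : used lt 0 = set0. Proof. by []. Qed.

Lemma level_spec x : [/\ x \in used lt (level lt x), level lt x <= #|T| &
   forall k, k < level lt x -> x \notin used lt k].
Proof.
have Hhas : has (fun k => x \in used lt k) (iota 0 #|T|.+1).
  apply/hasP; exists #|T|; last exact: used_all.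
  by rewrite mem_iota add0n ltnS leq0n leqnn.
have Hlt : level lt x < #|T|.+1 by move: (Hhas); rewrite has_find size_iota.
split.
- have := nth_find 0 Hhas; by rewrite nth_iota // add0n.
- by [].
- move=> k Hk; have := before_find 0 Hk; rewrite nth_iota ?add0n => [->//|].
  exact: ltn_trans Hk Hlt.
Qed.

Lemma used_level x k : (x \in used lt k) = (level lt x <= k).
Proof.
case: (level_spec x) => H1 _ H3; apply/idP/idP.
- move=> Hk; rewrite leqNgt; apply/negP => /H3; by rewrite Hk.
- move=> Hle; exact: (subsetP (used_mono Hle)).
Qed.

Lemma level_ge1 x : 1 <= level lt x.
Proof. case: (level_spec x) => H _ _; rewrite lt0n; apply/negP => /eqP E; by rewrite E inE in H. Qed.

Lemma level_le x : level lt x <= #|T|.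
Proof. by case: (level_spec x). Qed.

Lemma lt_level y x : lt y x -> level lt y < level lt x.
Proof.
move=> Hyx; have Hx := level_ge1 x.
have : x \in used lt (level lt x).-1.+1 by rewrite prednK // used_level.
rewrite usedS used_level; have -> : (level lt x <= (level lt x).-1) = false by lia.
move=> /= /forallP /(_ y); rewrite Hyx /= used_level; lia.
Qed.

Lemma level_pred x : 2 <= level lt x -> exists y, lt y x /\ level lt y = (level lt x).-1.
Proof.
move=> H2.
have : x \notin used lt (level lt x).-2.+1 by rewrite used_level; lia.
rewrite usedS negb_or => /andP [_ /forallPn [y]]; rewrite negb_imply used_level => /andP [Hy Hl].
exists y; split => //; have := lt_level Hy; lia.
Qed.

Lemma Dn_used x y : Dn lt x = Dn lt y -> forall k, (x \in used lt k) = (y \in used lt k).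
Proof.
move=> E; elim => [|k IH]; first by rewrite !inE.
rewrite !usedS IH; congr (_ || _); apply/forallP/forallP => H z; move: (H z).
- by have := congr1 (fun S : {set T} => z \in S) E; rewrite !inE => ->.
- by have := congr1 (fun S : {set T} => z \in S) E; rewrite !inE => <-.
Qed.

Lemma Dn_level x y : Dn lt x = Dn lt y -> level lt x = level lt y.
Proof.
move=> E; apply/eqP; rewrite eqn_leq -!used_level.
apply/andP; split.
- by rewrite (Dn_used E) used_level.
- by rewrite -(Dn_used E) used_level.
Qed.

End Levels.

Section Free.
Variables (T : finType) (lt : rel T).
Hypothesis Hso : strict_order lt.
Hypothesis Hf : free31 lt.

Local Notation level := (level lt).

Lemma L2 a b : level a + 2 <= level b -> lt a b.
Proof.
move: {2}(level b) (leqnn (level b)) => n; elim: n a b => [|n IH] a b Hb Hab; first lia.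
have Ha1 := level_ge1 Hso a.
have [x [Hxb Hlx]] : exists x, lt x b /\ level x = (level b).-1 by apply: level_pred => //; lia.
case: (leqP (level a + 2) (level x)) => Hax.
  apply: (lt_trans Hso (IH a x _ Hax) Hxb); lia.
have [y [Hyx Hly]] : exists y, lt y x /\ level y = (level x).-1 by apply: level_pred => //; lia.
case: (eqVneq a y) => [->|Hay]; first exact: (lt_trans Hso Hyx Hxb).
apply/negPn/negP => Hnab; case: Hf; exists y, x, b, a.
have Hnax : ~~ lt a x by apply/negP => H; move/negP: Hnab; apply; exact: (lt_trans Hso H Hxb).
have Hlb := level_ge1 Hso b.
split => //; rewrite /incomp.
- rewrite Hay /=; apply/andP; split; apply/negP => /(lt_level Hso); lia.
- apply/and3P; split => //; [apply/negP => /eqP E; subst; lia| apply/negP => /(lt_level Hso); lia].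
- apply/and3P; split => //; [apply/negP => /eqP E; subst; lia| apply/negP => /(lt_level Hso); lia].
Qed.

Lemma notsub_Dn a b : ~~ (Dn lt a \subset Dn lt b) -> level b <= level a.
Proof.
case/subsetPn => x; rewrite !inE => Hxa Hxb.
have := lt_level Hso Hxa; case: (leqP (level x + 2) (level b)) => H.
  by move: Hxb; rewrite (L2 H).
lia.
Qed.

Lemma notsub_Up a b : ~~ (Up lt a \subset Up lt b) -> level a <= level b.
Proof.
case/subsetPn => x; rewrite !inE => Hxa Hxb.
have := lt_level Hso Hxa; case: (leqP (level b + 2) (level x)) => H.
  by move: Hxb; rewrite (L2 H).
lia.
Qed.

Lemma top_rel_level a b : top_rel lt a b -> level a = level b.
Proof. case/andP => /notsub_Dn H1 /notsub_Dn H2; lia. Qed.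

Lemma bot_rel_level a b : bot_rel lt a b -> level a = level b.
Proof. case/andP => /notsub_Up H1 /notsub_Up H2; lia. Qed.

Lemma connect_level (e : rel T) a x : (forall a b, e a b -> level a = level b) ->
  connect e a x -> level a = level x.
Proof.
move=> He /connectP [p Hp ->]; elim: p a Hp => [|y p IHp] a //= /andP [Hay Hp].
by rewrite (He _ _ Hay) (IHp _ Hp).
Qed.

Lemma tangle_levels X : is_tangle lt X -> exists l,
  [/\ 1 <= l, forall x, x \in X -> l <= level x <= l.+1 & exists2 x, x \in X & level x = l].
Proof.
case/existsP => A /existsP [B /and4P [HA HB Hm /eqP HX]].
case/andP: HA => _ /existsP [a /eqP HA]; case/andP: HB => _ /existsP [b /eqP HB].
have LA x : x \in A -> level x = level a.
  by rewrite HA inE => /(connect_level (@top_rel_level)) ->.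
have LB x : x \in B -> level x = level b.
  by rewrite HB inE => /(connect_level (@bot_rel_level)) ->.
case/existsP: Hm => a1 /existsP [a2 /existsP [b1 /existsP [b2 H]]].
move: H => /and4P [Ha1 Ha2 Hb1 /and4P [Hb2 _ _ /and4P [Hba1 _ _ /and3P [_ Hinc _]]]].
have E1 := LA _ Ha1; have E2 := LA _ Ha2; have E3 := LB _ Hb1.
have := lt_level Hso Hba1.
have : level a2 < level b1 + 2.
  rewrite ltnNge; apply/negP => /L2 H; move: Hinc; by rewrite /incomp H /= andbF.
move=> H1 H2.
exists (level b); split.
- exact: level_ge1.
- move=> x; rewrite HX inE => /orP [/LA|/LB] ->; lia.
- by exists b1; rewrite ?HX ?inE ?Hb1 ?orbT.
Qed.

Lemma clone_level x y : clone lt x y -> level x = level y.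
Proof. by case/andP => /eqP E _; apply: Dn_level. Qed.

Lemma clone_set_levels X : is_clone_set lt X -> exists2 x, x \in X & forall y, y \in X -> level y = level x.
Proof.
case/existsP => x /andP [Hx /eqP ->]; exists x; first by rewrite inE Hx /clone !eqxx.
by move=> y; rewrite inE => /andP [_ /clone_level ->].
Qed.

Definition minlev (X : {set T}) := \big[minn/#|T|.+1]_(x in X) level x.

Lemma minlev_eq (X : {set T}) x0 c : x0 \in X -> level x0 = c -> (forall x, x \in X -> c <= level x) ->
  minlev X = c.
Proof.
move=> Hx0 Hc Hall; apply/eqP; rewrite eqn_leq; apply/andP; split.
- rewrite /minlev -big_filter -Hc.
  have : x0 \in [seq x <- index_enum T | x \in X] by rewrite mem_filter Hx0 mem_index_enum.
  elim: [seq x <- index_enum T | x \in X] => // y s IH; rewrite inE big_cons => /orP [/eqP <-|H]; first exact: geq_minl.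
  exact: leq_trans (geq_minr _ _) (IH H).
- apply: (big_ind (fun m => c <= m)).
  + have := level_le Hso x0; lia.
  + move=> m1 m2 H1 H2; rewrite leq_min H1 H2 //.
  + exact: Hall.
Qed.

Lemma part_letter_tangle X : is_tangle lt X -> exists l,
  [/\ part_letter lt X = Lt l, 1 <= l, forall x, x \in X -> l <= level x <= l.+1 & exists2 x, x \in X & level x = l].
Proof.
move=> HX; case: (tangle_levels HX) => l [H1 H2 [x0 Hx0 Hl]]; exists l; split => //; last by exists x0.
rewrite /part_letter HX; congr Lt; apply: (minlev_eq Hx0 Hl).
by move=> x /H2 /andP [].
Qed.

Lemma part_letter_clone X : ~~ is_tangle lt X -> is_clone_set lt X -> exists l,
  [/\ part_letter lt X = Lc l, 1 <= l, forall x, x \in X -> level x = l & exists x, x \in X].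
Proof.
move=> HnX HX; case: (clone_set_levels HX) => x0 Hx0 Hl; exists (level x0); split => //.
- rewrite /part_letter (negbTE HnX); congr Lc; apply: (minlev_eq Hx0 erefl).
  by move=> x /Hl ->.
- exact: level_ge1.
- by exists x0.
Qed.

End Free.

Notation d0 := (Lc 0).
Notation wn w i := (nth d0 w i).

Lemma commuteC a b : commute_letters a b = commute_letters b a.
Proof. case: a b => i [] j /=; lia. Qed.

Lemma commute_cc i : commute_letters (Lc i) (Lc i) = false.
Proof. rewrite /=; lia. Qed.

Definition good1 (a : letter) : Prop := starts_c1_or_t12 [:: a].

Definition I1 (w : seq letter) : Prop := 0 < size w /\ forall q, q < size w ->
  (forall p, p < q -> commute_letters (wn w p) (wn w q)) -> good1 (wn w q).

Definition I2 (w : seq letter) : Prop := forall p q i, p < q -> q < size w ->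
  wn w p = Lc i -> wn w q = Lc i -> exists r, [/\ p < r, r < q & ~~ commute_letters (Lc i) (wn w r)].

Definition swp (k i : nat) := if i == k then k.+1 else if i == k.+1 then k else i.

Lemma sigK k i : swp k (swp k i) = i.
Proof. rewrite /swp; repeat case: ifP; lia. Qed.

Lemma sig_lt k p q : p < q -> swp k p < swp k q \/ (p = k /\ q = k.+1).
Proof. rewrite /swp; repeat case: ifP; lia. Qed.

Lemma sig_size k n i : k.+1 < n -> (swp k i < n) = (i < n).
Proof. rewrite /swp; repeat case: ifP; lia. Qed.

Lemma sig_k k : swp k k = k.+1. Proof. by rewrite /swp eqxx. Qed.
Lemma sig_k1 k : swp k k.+1 = k. Proof. rewrite /swp; repeat case: ifP; lia. Qed.
Lemma sig_o k i : i != k -> i != k.+1 -> swp k i = i. Proof. rewrite /swp; repeat case: ifP; lia. Qed.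

Lemma nth_mid (u s : seq letter) j : wn (u ++ s) (size u + j) = wn s j.
Proof. by rewrite nth_cat ltnNge leq_addr /= addKn. Qed.

Lemma nth_mid0 (u s : seq letter) : wn (u ++ s) (size u) = wn s 0.
Proof. by rewrite -(nth_mid u s 0) addn0. Qed.
Lemma nth_mid1 (u s : seq letter) : wn (u ++ s) (size u).+1 = wn s 1.
Proof. by rewrite -(nth_mid u s 1) addn1. Qed.

Lemma nth_swap u a b v i : wn (u ++ b :: a :: v) i = wn (u ++ a :: b :: v) (swp (size u) i).
Proof.
case: (ltnP i (size u)) => Hi.
  rewrite sig_o ?nth_cat ?Hi //; lia.
have -> : i = size u + (i - size u) by lia.
case: (i - size u) => [|[|j]].
- by rewrite addn0 sig_k nth_mid0 nth_mid1.
- by rewrite addn1 sig_k1 nth_mid0 nth_mid1.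
- by rewrite sig_o ?nth_mid //; lia.
Qed.

Lemma I1_swap u a b v : commute_letters a b -> I1 (u ++ a :: b :: v) -> I1 (u ++ b :: a :: v).
Proof.
move=> Hab [Hs H]; split; first by rewrite size_cat /=; lia.
have Hsz : size (u ++ b :: a :: v) = size (u ++ a :: b :: v) by rewrite !size_cat.
have E := nth_swap u a b v.
move=> q Hq Hp; rewrite E; apply: H.
  rewrite sig_size; [by rewrite -Hsz | rewrite size_cat /=; lia].
move=> p0 Hp0; case: (sig_lt (size u) Hp0) => [Hl|[E1 E2]].
- have := Hp (swp (size u) p0); rewrite !E !sigK; apply.
  by move: Hl; rewrite sigK.
- by rewrite E1 E2 nth_mid0 nth_mid1.
Qed.

Lemma I2_swap u a b v : commute_letters a b -> I2 (u ++ a :: b :: v) -> I2 (u ++ b :: a :: v).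
Proof.
have E := nth_swap u a b v.
move=> Hab H p q i Hpq Hq; rewrite !E => Hp Hqi.
have Hsz : size (u ++ b :: a :: v) = size (u ++ a :: b :: v) by rewrite !size_cat.
have Hnk : (nth d0 (u ++ a :: b :: v) (size u) = a) * (nth d0 (u ++ a :: b :: v) (size u).+1 = b).
  by rewrite nth_mid0 nth_mid1.
case: (sig_lt (size u) Hpq) => [Hl|[E1 E2]]; last first.
  move: Hp Hqi; rewrite E1 E2 sig_k sig_k1 !Hnk => Ha Hb; move: Hab; by rewrite Ha Hb commute_cc.
have Hq' : swp (size u) q < size (u ++ a :: b :: v).
  rewrite -Hsz sig_size //; rewrite size_cat /=; lia.
case: (H _ _ _ Hl Hq' Hp Hqi) => r0 [Hr1 Hr2 Hr3].
case: (sig_lt (size u) Hr1) => [Hl1|[E1 E2]]; last first.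
  move: Hp Hr3; rewrite E1 E2 !Hnk => <-; by rewrite Hab.
case: (sig_lt (size u) Hr2) => [Hl2|[E1 E2]]; last first.
  move: Hqi Hr3; rewrite E1 E2 !Hnk => <-; by rewrite commuteC Hab.
exists (swp (size u) r0); rewrite !sigK in Hl1 Hl2; split => //.
by rewrite E sigK.
Qed.

Lemma swap_step_sym x y : swap_step x y -> swap_step y x.
Proof. case=> u [v [a [b [Hab [-> ->]]]]]; exists u, v, b, a; by rewrite commuteC. Qed.

Lemma swap_I x y : swap_step x y -> (I1 x /\ I2 x) -> (I1 y /\ I2 y).
Proof. case=> u [v [a [b [Hab [-> ->]]]]] [H1 H2]; split; [exact: I1_swap|exact: I2_swap]. Qed.

Lemma equiv_I x y : word_equiv x y -> (I1 x /\ I2 x) <-> (I1 y /\ I2 y).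
Proof.
elim => {x y} [x y H|x|x y _ IH|x y z _ IH1 _ IH2].
- split; first exact: swap_I. by apply: swap_I; apply: swap_step_sym.
- by [].
- by rewrite IH.
- by rewrite IH1 IH2.
Qed.

Lemma I_conds w : I1 w -> I2 w -> starts_c1_or_t12 w /\ ~ has_factor_cici w.
Proof.
move=> [Hs H1] H2; split.
- have := H1 0 Hs; case: w Hs {H1 H2} => //= x w _; rewrite /good1; case: x => [[|[|n]]|[|[|n]]] //=; apply => //.
- case=> u [v [i E]].
  have := H2 (size u) (size u).+1 i (ltnSn _); rewrite E size_cat /=.
  have Hn : (nth d0 (u ++ Lc i :: Lc i :: v) (size u) = Lc i) * (nth d0 (u ++ Lc i :: Lc i :: v) (size u).+1 = Lc i).
    by rewrite nth_mid0 nth_mid1.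
  rewrite !Hn => /(_ ltac:(lia) erefl erefl) [r [? ? _]]; lia.
Qed.

Lemma equiv_prefix p x y : word_equiv x y -> word_equiv (p ++ x) (p ++ y).
Proof.
elim => {x y} [x y H|x|x y _ IH|x y z _ IH1 _ IH2].
- apply: rst_step; case: H => u [v [a [b [Hab [-> ->]]]]]; exists (p ++ u), v, a, b; by rewrite !catA.
- exact: rst_refl.
- exact: rst_sym.
- exact: rst_trans IH2.
Qed.

Lemma equiv_move p u x v : all (commute_letters x) u -> word_equiv (p ++ u ++ x :: v) (p ++ x :: u ++ v).
Proof.
elim: u p => [|y u IH] p /=; first by move=> _; apply: rst_refl.
case/andP => Hxy Hu; have := IH (p ++ [:: y]) Hu; rewrite -!catA /= => H1.
apply: (rst_trans _ _ _ _ _ H1).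
apply: rst_step; exists p, (u ++ v), y, x; by rewrite commuteC Hxy.
Qed.

Lemma conds_I1 w : (forall w', word_equiv w w' -> starts_c1_or_t12 w') -> I1 w.
Proof.
move=> H; split.
  case: w H => //= H; by have := H [::] (rst_refl _ _ _).
move=> q Hq Hp.
have E : w = take q w ++ wn w q :: drop q.+1 w.
  by rewrite -{1}(cat_take_drop q w) (drop_nth d0 Hq).
have Hall : all (commute_letters (wn w q)) (take q w).
  apply/(all_nthP d0) => p; rewrite size_take Hq => Hpq.
  by rewrite nth_take // commuteC Hp.
have Hw : word_equiv w (wn w q :: take q w ++ drop q.+1 w).
  rewrite {1}E; exact: (equiv_move [::] (drop q.+1 w) Hall).
have := H _ Hw.
by rewrite /good1 /=; case: (wn w q) => [[|[|n]]|[|[|n]]].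
Qed.

Lemma conds_I2 w : (forall w', word_equiv w w' -> ~ has_factor_cici w') -> I2 w.
Proof.
move=> H p q i Hpq Hq Hp Hqi.
case: (boolP [exists r : 'I_(size w), (p < r < q) && ~~ commute_letters (Lc i) (wn w r)]).
  case/existsP => r /andP [/andP [H1 H2] H3]; by exists r.
move=> /existsPn Hn; exfalso.
set m := take (q - p.+1) (drop p.+1 w).
have Hpw : p < size w by lia.
have E : w = take p w ++ Lc i :: m ++ Lc i :: drop q.+1 w.
  rewrite -{1}(cat_take_drop p.+1 w) (take_nth d0 Hpw) -cats1 -catA Hp /=; congr (_ ++ Lc i :: _).
  rewrite -{1}(cat_take_drop (q - p.+1) (drop p.+1 w)) drop_drop.
  have -> : q - p.+1 + p.+1 = q by lia.
  by rewrite (drop_nth d0 Hq) Hqi.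
have Hall : all (commute_letters (Lc i)) m.
  apply/(all_nthP d0) => r; rewrite size_take size_drop => Hr.
  have Hr' : r < q - p.+1 by move: Hr; case: ifP => H'; lia.
  rewrite nth_take // nth_drop.
  have Hrw : p.+1 + r < size w by lia.
  move: (Hn (Ordinal Hrw)) => /=; rewrite negb_and negbK => /orP [|//]; lia.
apply: (H (take p w ++ Lc i :: Lc i :: m ++ drop q.+1 w)).
  have := (equiv_move (take p w ++ [:: Lc i]) (drop q.+1 w) Hall).
  by rewrite -!catA /= -E.
by exists (take p w), (m ++ drop q.+1 w), i.
Qed.

Section Forward.
Variables (T : finType) (lt : rel T).
Hypothesis Hso : strict_order lt.
Hypothesis Hf : free31 lt.
Variable s : seq {set T}.
Hypothesis Hs : compatible_listing lt s.

Local Notation level := (level lt).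
Local Notation W := (map (part_letter lt) s).
Local Notation X_ j := (nth set0 s j).

Lemma cloneP a b : reflect (Dn lt a = Dn lt b /\ Up lt a = Up lt b) (clone lt a b).
Proof. apply: (iffP andP) => [[/eqP -> /eqP ->]|[-> ->]] //. Qed.

Lemma part_of z : exists2 r, r < size s & z \in X_ r.
Proof.
case: Hs => _ Hpart _.
have [X HX HzX] : exists2 X, is_part lt X & z \in X.
  case: (boolP (in_tangle lt z)) => [/existsP [X /andP [H1 H2]]|Hn].
    by exists X; rewrite /is_part ?H1.
  exists [set y | ~~ in_tangle lt y && clone lt z y].
    apply/orP; right; apply/existsP; exists z; by rewrite Hn eqxx.
  by rewrite inE Hn; apply/cloneP.
rewrite -Hpart in HX; exists (index X s); first by rewrite index_mem.
by rewrite nth_index.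
Qed.

Lemma Wnth r : r < size s -> wn W r = part_letter lt (X_ r).
Proof. move=> Hr; by rewrite (nth_map set0). Qed.

Lemma part_info r z : r < size s -> z \in X_ r ->
  (exists l, wn W r = Lc l /\ forall y, y \in X_ r -> level y = l) \/
  (exists l, wn W r = Lt l /\ forall y, y \in X_ r -> l <= level y <= l.+1).
Proof.
move=> Hr Hz; case: Hs => _ Hpart _.
have : is_part lt (X_ r) by rewrite -Hpart mem_nth.
rewrite Wnth //; case: (boolP (is_tangle lt (X_ r))) => Ht /= Hp.
- right; case: (part_letter_tangle Hso Hf Ht) => l [E _ H _]; by exists l.
- have {}Hp : is_clone_set lt (X_ r) by move: Hp; rewrite /is_part (negbTE Ht).
  left; case: (part_letter_clone Hso Ht Hp) => l [E _ H _]; by exists l.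
Qed.

Lemma part_min r : r < size s ->
  exists2 a, a \in X_ r & (wn W r = Lc (level a) \/ wn W r = Lt (level a)) /\
     forall y, y \in X_ r -> level a <= level y.
Proof.
move=> Hr; case: Hs => _ Hpart _.
have : is_part lt (X_ r) by rewrite -Hpart mem_nth.
rewrite Wnth //; case: (boolP (is_tangle lt (X_ r))) => Ht /= Hp.
- case: (part_letter_tangle Hso Hf Ht) => l [E _ H [a Ha Hl]]; exists a => //; split.
    by right; rewrite E Hl.
  by move=> y /H; lia.
- have {}Hp : is_clone_set lt (X_ r) by move: Hp; rewrite /is_part (negbTE Ht).
  case: (part_letter_clone Hso Ht Hp) => l [E _ H [a Ha]]; exists a => //; split.
    by left; rewrite E H.
  by move=> y /H; rewrite (H a Ha); lia.
Qed.

Lemma lt_listing i j a b : i < size s -> j < size s -> i != j -> a \in X_ i -> b \in X_ j ->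
  lt a b = (level a + 2 <= level b) || ((level a + 1 == level b) && (i < j)).
Proof. case: Hs => _ _ H; exact: H. Qed.

Lemma size_W_pos : 0 < #|T| -> 0 < size s.
Proof. case/card_gt0P => x _; case: (part_of x) => r Hr _; lia. Qed.

Lemma listing_I1 : 0 < #|T| -> I1 W.
Proof.
move=> Hn; split; first by rewrite size_map; apply: size_W_pos.
move=> q; rewrite size_map => Hq Hcomm.
case: (part_min Hq) => a Ha [HL Hmin].
case: (leqP (level a) 1) => Hl1.
  have E : level a = 1 by have := level_ge1 Hso a; lia.
  by case: HL; rewrite E => ->.
case: (level_pred Hso Hl1) => b [Hba Hlb].
case: (part_of b) => p Hp Hbp.
have Hpq : p != q.
  apply/negP => /eqP E; subst p; have := Hmin b Hbp; lia.
have Hpq' : p < q.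
  move: Hba; rewrite (lt_listing Hp Hq Hpq Hbp Ha); lia.
have := Hcomm p Hpq'; rewrite !(nth_map set0) // -!Wnth //.
case: (part_info Hp Hbp) => [[l [-> Hl]]|[l [-> Hl]]]; have := Hl b Hbp;
  case: HL => ->; rewrite /=; lia.
Qed.

Lemma clone_set_clone X x z : is_clone_set lt X -> x \in X -> z \in X -> clone lt x z.
Proof.
case/existsP => x0 /andP [_ /eqP ->]; rewrite !inE => /andP [_ /cloneP [H1 H2]] /andP [_ /cloneP [H3 H4]].
by apply/cloneP; rewrite -H1 -H2 -H3 -H4.
Qed.

Lemma listing_I2 : I2 W.
Proof.
move=> p q i Hpq; rewrite size_map => Hq.
have Hp : p < size s by lia.
rewrite !Wnth // => Hpi Hqi.
case: (boolP [exists r : 'I_(size s), (p < r < q) && ~~ commute_letters (Lc i) (wn W r)]).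
  case/existsP => r /andP [/andP [H1 H2] H3]; by exists r.
move=> /existsPn Hn; exfalso.
have Hcomm r z : p < r < q -> z \in X_ r -> (level z + 1 != i) && (level z != i + 1).
  move=> /andP [H1 H2] Hz; have Hr : r < size s by lia.
  move: (Hn (Ordinal Hr)); rewrite /= H1 H2 /= negbK.
  case: (part_info Hr Hz) => [[l [-> Hl]]|[l [-> Hl]]]; have := Hl z Hz; rewrite /=; lia.
case: Hs => Hu Hpart _.
have HXp : is_part lt (X_ p) by rewrite -Hpart mem_nth.
have HXq : is_part lt (X_ q) by rewrite -Hpart mem_nth.
have Hnt r : r < size s -> part_letter lt (X_ r) = Lc i -> ~~ is_tangle lt (X_ r) && is_clone_set lt (X_ r).
  move=> Hr HL; have HXr : is_part lt (X_ r) by rewrite -Hpart mem_nth.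
  move: HL; rewrite /part_letter; case: ifP => // Ht _; by move: HXr; rewrite /is_part Ht.
case/andP: (Hnt p Hp Hpi) => Htp Hcp; case/andP: (Hnt q Hq Hqi) => Htq Hcq.
case: (part_letter_clone Hso Htp Hcp) => l1 [E1 _ L1 [x Hx]].
case: (part_letter_clone Hso Htq Hcq) => l2 [E2 _ L2 [y Hy]].
move: Hpi Hqi; rewrite E1 E2 => [][El1] [El2]; subst l1 l2.
have Hpq' : p != q by lia.
have Hqp : q != p by lia.
have Hxy : clone lt x y.
  apply/cloneP; split; apply/setP => z; rewrite !inE; case: (part_of z) => r Hr Hz.
  - case: (eqVneq r p) => [Erp|Hrp].
      subst r; have /cloneP [E _] := clone_set_clone Hcp Hz Hx.
      have -> : lt z x = false by have := congr1 (fun S : {set T} => z \in S) E; rewrite !inE lt_irr.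
      by rewrite (lt_listing Hp Hq Hpq' Hz Hy) (L1 _ Hz) (L2 _ Hy); lia.
    case: (eqVneq r q) => [Erq|Hrq].
      subst r; have /cloneP [E _] := clone_set_clone Hcq Hz Hy.
      have -> : lt z y = false by have := congr1 (fun S : {set T} => z \in S) E; rewrite !inE lt_irr.
      by rewrite (lt_listing Hq Hp Hqp Hz Hx) (L1 _ Hx) (L2 _ Hz); lia.
    rewrite (lt_listing Hr Hp Hrp Hz Hx) (lt_listing Hr Hq Hrq Hz Hy) (L1 _ Hx) (L2 _ Hy).
    case: (ltnP p r) => H1; case: (ltnP r q) => H2.
    + have := Hcomm r z ltac:(by rewrite H1 H2) Hz. lia.
    + lia.
    + lia.
    + lia.
  - case: (eqVneq r p) => [Erp|Hrp].
      subst r; have /cloneP [_ E] := clone_set_clone Hcp Hz Hx.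
      have -> : lt x z = false by have := congr1 (fun S : {set T} => z \in S) E; rewrite !inE lt_irr.
      by rewrite (lt_listing Hq Hp Hqp Hy Hz) (L1 _ Hz) (L2 _ Hy); lia.
    case: (eqVneq r q) => [Erq|Hrq].
      subst r; have /cloneP [_ E] := clone_set_clone Hcq Hz Hy.
      have -> : lt y z = false by have := congr1 (fun S : {set T} => z \in S) E; rewrite !inE lt_irr.
      by rewrite (lt_listing Hp Hq Hpq' Hx Hz) (L1 _ Hx) (L2 _ Hz); lia.
    have Hpr : p != r by rewrite eq_sym.
    have Hqr : q != r by rewrite eq_sym.
    rewrite (lt_listing Hp Hr Hpr Hx Hz) (lt_listing Hq Hr Hqr Hy Hz) (L1 _ Hx) (L2 _ Hy).
    case: (ltnP p r) => H1; case: (ltnP r q) => H2.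
    + have := Hcomm r z ltac:(by rewrite H1 H2) Hz. lia.
    + lia.
    + lia.
    + lia.
have Ech X u0 : is_clone_set lt X -> u0 \in X -> X = [set v | ~~ in_tangle lt v && clone lt u0 v].
  move=> HX Hu0; have := HX; case/existsP => x0 /andP [_ /eqP EX].
  have := Hu0; rewrite {1}EX inE => /andP [_ /cloneP [D1 U1]].
  rewrite {1}EX; apply/setP => v; rewrite !inE; congr (_ && _).
  by apply/cloneP/cloneP; rewrite D1 U1.
have EXY : X_ p = X_ q.
  rewrite (Ech _ _ Hcp Hx) (Ech _ _ Hcq Hy); apply/setP => v; rewrite !inE; congr (_ && _).
  case/cloneP: Hxy => D1 U1; by apply/cloneP/cloneP; rewrite D1 U1.
move/eqP: EXY; by rewrite nth_uniq // (negbTE Hpq').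
Qed.

End Forward.

Section Construct.
Variable w : seq letter.
Hypothesis hw : all valid_letter w.

Definition isTl (a : letter) : bool := if a is Lt _ then true else false.

Definition Tc := ('I_(size w) * 'I_4)%type.

Definition idx (x : Tc) : nat := letter_index (wn w x.1).
Definition top (x : Tc) : bool := isTl (wn w x.1) && (x.2 < 2).
Definition bot (x : Tc) : bool := isTl (wn w x.1) && (1 < x.2).
Definition lev (x : Tc) : nat := idx x + top x.
Definition intra (x y : Tc) : bool :=
  isTl (wn w x.1) && (((x.2 == 2 :> nat) && (y.2 == 0 :> nat)) || ((x.2 == 3 :> nat) && (y.2 == 1 :> nat))).

Definition ltw (x y : Tc) : bool :=
  if x.1 == y.1 then intra x y
  else (lev x + 2 <= lev y) || ((lev x + 1 == lev y) && (x.1 < y.1)).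

Lemma idx_ge1 (x : Tc) : 1 <= idx x.
Proof. rewrite /idx; have := (all_nthP d0 hw) x.1 (ltn_ord _); by rewrite /valid_letter. Qed.

Lemma idx_same (x y : Tc) : x.1 = y.1 -> idx x = idx y.
Proof. by rewrite /idx => ->. Qed.

Lemma lev_same (x y : Tc) : x.1 = y.1 -> lev y <= lev x + 1.
Proof. move=> E; rewrite /lev (idx_same E); case: (top x); case: (top y) => /=; lia. Qed.

Lemma intra_lev (x y : Tc) : x.1 = y.1 -> intra x y -> lev y = lev x + 1.
Proof.
move=> E; rewrite /intra /lev /top (idx_same E) E.
case: (isTl _) => //=; case: x E => [a [[|[|[|[|r]]]] Hr]] /=; case: y => [b [[|[|[|[|t]]]] Ht]] /= E //=; lia.
Qed.

Lemma ltw_ar (x y : Tc) : ltw x y ->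
  ((x.1 : nat) = y.1 /\ lev y = lev x + 1) \/
  ((x.1 : nat) <> y.1 /\ (lev x + 2 <= lev y \/ (lev x + 1 = lev y /\ x.1 < y.1))).
Proof.
rewrite /ltw; case: (x.1 =P y.1) => [E H|E H].
- left; split; [by rewrite E|exact: intra_lev].
- right; split; [by move=> H'; apply: E; apply: val_inj|lia].
Qed.

Lemma nltw_ar (x y : Tc) : ~~ ltw x y -> (x.1 : nat) = y.1 \/ (lev y < lev x + 2 /\ (lev x + 1 = lev y -> y.1 <= x.1)).
Proof.
rewrite /ltw; case: (x.1 =P y.1) => [E _|E H]; first by left; rewrite E.
right; lia.
Qed.

Lemma same_ar (x y : Tc) : (x.1 : nat) = y.1 -> lev y <= lev x + 1.
Proof. move=> E; apply: lev_same; exact: val_inj. Qed.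

Lemma ltw_lev (x y : Tc) : ltw x y -> lev x < lev y.
Proof. move/ltw_ar; lia. Qed.

Lemma ltw_so : strict_order ltw.
Proof.
split.
- move=> x; rewrite /ltw eqxx /intra; apply/negP => /andP [_ /orP [] /andP [/eqP H1 /eqP H2]]; lia.
- move=> x y z Hxy Hyz; have := ltw_lev Hxy; have := ltw_lev Hyz => H1 H2.
  rewrite /ltw; case: eqP => [E|_].
    have := lev_same E; lia.
  apply/orP; left; lia.
Qed.

Lemma ltw_free : free31 ltw.
Proof.
case=> a [b [c [d [Hab Hbc Hda Hdb Hdc]]]].
move: Hda Hdb Hdc; rewrite /incomp => /and3P [_ Hda1 Hda2] /and3P [_ Hdb1 Hdb2] /and3P [_ Hdc1 Hdc2].
have := ltw_ar Hab; have := ltw_ar Hbc.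
have := nltw_ar Hda2; have := nltw_ar Hdc1.
have := @same_ar a d; have := @same_ar d c; have := @same_ar a c.
lia.
Qed.


Hypothesis HI1 : I1 w.
Hypothesis HI2 : I2 w.

Definition has_lev (a : letter) m : bool := match a with Lc i => i == m | Lt i => (i == m) || (i.+1 == m) end.
Definition maxlev (a : letter) : nat := match a with Lc i => i | Lt i => i.+1 end.

Lemma Cpos k : k < size w -> 2 <= letter_index (wn w k) ->
  exists2 p, p < k & has_lev (wn w p) (letter_index (wn w k)).-1.
Proof.
elim/ltn_ind: k => k IH Hk H2.
have G : forall m, 1 <= m -> forall M, m <= M -> (exists2 p, p < k & has_lev (wn w p) M) ->
    exists2 p, p < k & has_lev (wn w p) m.
  move=> m Hm; elim => [|M IHM] HmM [p Hpk Hp]; first lia.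
  case: (eqVneq m M.+1) => [->|Hne]; first by exists p.
  apply: IHM; first lia.
  have Hps : p < size w by lia.
  move: Hp; case E: (wn w p) => [i|i] /= Hp.
  - have := IH p Hpk Hps; rewrite E /= => /(_ ltac:(lia)) [p' Hp' Hl]; exists p' => //; first lia.
    by move: Hl; rewrite (eqP Hp).
  - case/orP: Hp => Hp.
    + have := IH p Hpk Hps; rewrite E /= => /(_ ltac:(lia)) [p' Hp' Hl]; exists p' => //; first lia.
      by move: Hl; rewrite (eqP Hp).
    + exists p => //; rewrite E /=; lia.
case: (boolP [exists p : 'I_k, ~~ commute_letters (wn w p) (wn w k)]) => [/existsP [p Hp]|/existsPn Hn].
  apply: (G _ _ (maxlev (wn w p))); first lia.
    move: Hp; case: (wn w p) => [j|j]; case: (wn w k) => [i|i] /=; lia.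
  exists p => //; case: (wn w p) => [j|j] /=; lia.
case: HI1 => _ Hq; have := Hq k Hk.
have : forall p, p < k -> commute_letters (wn w p) (wn w k).
  move=> p Hp; have := Hn (Ordinal Hp); by rewrite negbK.
move=> Hc /(_ Hc); move: H2; rewrite /good1 /=; case: (wn w k) => [[|[|i]]|[|[|i]]] //.
Qed.

Lemma below_exists (x : Tc) : 2 <= lev x -> exists y, ltw y x /\ lev y = (lev x).-1.
Proof.
case Htop: (top x) => Hl.
- exists (x.1, inord (x.2 + 2)); move: Htop Hl; rewrite /ltw /= eqxx /intra /lev /top /idx /=.
  case: (isTl _) => //= Hx2 _; rewrite inordK; last by lia.
  have -> : (x.2 + 2 < 2) = false by lia.
  split; [|lia]; apply/orP; lia.
- have Hidx : 2 <= letter_index (wn w x.1) by move: Hl; rewrite /lev Htop /idx; lia.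
  case: (Cpos (ltn_ord x.1) Hidx) => p Hp Hhl.
  have Hps : p < size w by have := ltn_ord x.1; lia.
  pose r : 'I_4 := if wn w p is Lt j then (if j.+1 == (letter_index (wn w x.1)).-1 then inord 0 else inord 2) else inord 0.
  exists (Ordinal Hps, r).
  have Hlev : lev (Ordinal Hps, r) = (letter_index (wn w x.1)).-1.
    rewrite /lev /idx /top /r /=; move: Hhl.
    case E: (wn w p) => [i|i] /= Hi; rewrite ?inordK //=; first lia.
    case: eqP => [Ei|Hne]; rewrite inordK //=; lia.
  have Hlx : lev x = letter_index (wn w x.1) by rewrite /lev Htop addn0.
  rewrite Hlev Hlx; split => //.
  rewrite /ltw /=; have -> : (Ordinal Hps == x.1) = false by apply/negP => /eqP E; move: Hp; rewrite -E /=; lia.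
  apply/orP; right; rewrite Hlev /idx /=; apply/andP; split => //; lia.
Qed.

Lemma used_ltw k : used ltw k = [set x | lev x <= k].
Proof.
elim: k => [|k IH]; first by apply/setP => x; rewrite !inE /lev; have := idx_ge1 x; lia.
apply/setP => x; rewrite (usedS ltw) IH !inE.
case: (leqP (lev x) k) => Hk /=; first by lia.
apply/idP/idP.
- move/forallP => H; case: (leqP (lev x) k.+1) => // Hk2.
  case: (below_exists (x:=x) ltac:(lia)) => y [Hy Hly]; move: (H y); rewrite Hy inE /=; lia.
- move=> Hk2; apply/forallP => y; apply/implyP => /ltw_lev; rewrite inE; lia.
Qed.

Lemma level_ltw x : level ltw x = lev x.
Proof.
apply/eqP; rewrite eqn_leq; apply/andP; split.
- by rewrite -(used_level ltw_so) used_ltw inE.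
- by have := used_level ltw_so x (level ltw x); rewrite used_ltw inE leqnn.
Qed.


Lemma top_lev (x : Tc) : lev x = idx x + top x. Proof. by []. Qed.

Lemma top_bot_lev (x y : Tc) : x.1 = y.1 -> lev x = lev y -> top x = top y.
Proof. move=> E; rewrite /lev (idx_same E); case: (top x); case: (top y) => //=; lia. Qed.

Lemma Dn_eq (x y : Tc) : x.1 = y.1 -> lev x = lev y -> ~~ top x -> Dn ltw x = Dn ltw y.
Proof.
move=> E El Ht; have Ht' : ~~ top y by rewrite -(top_bot_lev E El).
apply/setP => z; rewrite !inE /ltw -E.
case: eqP => Ez; last by rewrite El.
rewrite /intra Ez; move: Ht Ht'; rewrite /top -E; case: (isTl _) => //= Hx Hy.
have -> : (x.2 == 0 :> nat) = false by lia.
have -> : (x.2 == 1 :> nat) = false by lia.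
have -> : (y.2 == 0 :> nat) = false by lia.
have -> : (y.2 == 1 :> nat) = false by lia.
by rewrite !andbF.
Qed.

Lemma Up_eq (x y : Tc) : x.1 = y.1 -> lev x = lev y -> ~~ bot x -> Up ltw x = Up ltw y.
Proof.
move=> E El Hb.
have Hb' : ~~ bot y.
  move: Hb El; rewrite /bot /lev /top (idx_same E) E; case: (isTl _) => //=; lia.
apply/setP => z; rewrite !inE /ltw -E.
case: eqP => Ez; last by rewrite El.
rewrite /intra -E; move: Hb Hb'; rewrite /bot -E; case: (isTl _) => //= Hx Hy.
have -> : (x.2 == 2 :> nat) = false by lia.
have -> : (x.2 == 3 :> nat) = false by lia.
have -> : (y.2 == 2 :> nat) = false by lia.
have -> : (y.2 == 3 :> nat) = false by lia.
by [].
Qed.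

Lemma ord_neq (n : nat) (a b : 'I_n) : (a : nat) <> b -> (a == b) = false.
Proof. move=> H; apply/negP => /eqP E; apply: H; by rewrite E. Qed.

Lemma Dn_sub_core (x y z : Tc) : lev x = lev y -> x.1 < y.1 -> ltw z x -> ltw z y.
Proof.
move=> El Hxy Hz.
have := ltw_ar Hz; have := @same_ar z y; have := @same_ar y z.
rewrite /ltw; have -> : (z.1 == y.1) = false.
  apply/negP => /eqP E; have := ltw_ar Hz; have := @same_ar z y; have := @same_ar y z.
  have E2 : (z.1 : nat) = y.1 by rewrite E. lia.
lia.
Qed.

Lemma Dn_sub (x y : Tc) : lev x = lev y -> x.1 < y.1 -> Dn ltw x \subset Dn ltw y.
Proof. move=> El Hxy; apply/subsetP => z; rewrite !inE; exact: Dn_sub_core. Qed.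

Lemma Up_sub_core (x y z : Tc) : lev x = lev y -> x.1 < y.1 -> ltw y z -> ltw x z.
Proof.
move=> El Hxy Hz.
have := ltw_ar Hz; have := @same_ar z x; have := @same_ar x z.
rewrite /ltw; have -> : (x.1 == z.1) = false.
  apply/negP => /eqP E; have := ltw_ar Hz; have := @same_ar z x; have := @same_ar x z.
  have E2 : (x.1 : nat) = z.1 by rewrite E. lia.
lia.
Qed.

Lemma Up_sub (x y : Tc) : lev x = lev y -> x.1 < y.1 -> Up ltw y \subset Up ltw x.
Proof. move=> El Hxy; apply/subsetP => z; rewrite !inE; exact: Up_sub_core. Qed.

Lemma lev_level (x y : Tc) : level ltw x = level ltw y -> lev x = lev y.
Proof. by rewrite !level_ltw. Qed.

Lemma top_rel_char x y : top_rel ltw x y -> x.1 = y.1 /\ top x /\ top y.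
Proof.
move=> H; have El := lev_level (top_rel_level ltw_so ltw_free H).
case/andP: H => H1 H2.
have Ex : x.1 = y.1.
  apply: val_inj; case: (ltngtP x.1 y.1) => // Hc.
  - by move: H1; rewrite Dn_sub.
  - by move: H2; rewrite Dn_sub.
split => //; split.
- apply/negPn/negP => Ht; by move: H1; rewrite (Dn_eq Ex El Ht) subxx.
- apply/negPn/negP => Ht; by move: H2; rewrite (Dn_eq (esym Ex) (esym El) Ht) subxx.
Qed.

Lemma bot_rel_char x y : bot_rel ltw x y -> x.1 = y.1 /\ bot x /\ bot y.
Proof.
move=> H; have El := lev_level (bot_rel_level ltw_so ltw_free H).
case/andP: H => H1 H2.
have Ex : x.1 = y.1.
  apply: val_inj; case: (ltngtP x.1 y.1) => // Hc.
  - by move: H2; rewrite Up_sub.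
  - by move: H1; rewrite Up_sub.
split => //; split.
- apply/negPn/negP => Ht; by move: H1; rewrite (Up_eq Ex El Ht) subxx.
- apply/negPn/negP => Ht; by move: H2; rewrite (Up_eq (esym Ex) (esym El) Ht) subxx.
Qed.


Lemma ltw_same (a b : Tc) : a.1 = b.1 -> ltw a b = intra a b.
Proof. by rewrite /ltw => ->; rewrite eqxx. Qed.

Lemma top_rel_tops (x y : Tc) : x.1 = y.1 -> top x -> top y -> x != y -> top_rel ltw x y.
Proof.
move=> E; rewrite /top /top_rel -E; case Ht: (isTl _) => //= Hx Hy Hne.
have Hne2 : (x.2 : nat) != y.2.
  apply/negP => /eqP E2; move/negP: Hne; apply; apply/eqP.
  by case: x y E E2 {Ht Hx Hy} => [a b] [c d] /= -> E2; congr pair; apply: val_inj.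
pose bx : Tc := (x.1, inord (x.2 + 2)); pose byy : Tc := (x.1, inord (y.2 + 2)).
apply/andP; split; apply/subsetPn.
- exists bx; rewrite inE ltw_same // /intra /bx /= Ht inordK //=; lia.
- exists byy; rewrite inE ltw_same //= /intra /byy /= Ht inordK //=; lia.
Qed.

Lemma bot_rel_bots (x y : Tc) : x.1 = y.1 -> bot x -> bot y -> x != y -> bot_rel ltw x y.
Proof.
move=> E; rewrite /bot /bot_rel -E; case Ht: (isTl _) => //= Hx Hy Hne.
have Hne2 : (x.2 : nat) != y.2.
  apply/negP => /eqP E2; move/negP: Hne; apply; apply/eqP.
  by case: x y E E2 {Ht Hx Hy} => [a b] [c d] /= -> E2; congr pair; apply: val_inj.
pose tx : Tc := (x.1, inord (x.2 - 2)); pose ty : Tc := (x.1, inord (y.2 - 2)).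
have H4 := ltn_ord x.2; have H4' := ltn_ord y.2.
apply/andP; split; apply/subsetPn.
- exists tx; rewrite inE ltw_same // /intra /tx /= -?E Ht inordK //=; lia.
- exists ty; rewrite inE ltw_same //= /intra /ty /= -?E Ht inordK //=; lia.
Qed.

Lemma connect_closed (e : rel Tc) (S : pred Tc) v x : S v -> (forall a b, S a -> e a b -> S b) ->
  connect e v x -> S x.
Proof.
move=> Hv Hc /connectP [p Hp ->]; elim: p v Hv Hp => [|y p IHp] v Hv //= /andP [Hvy Hp].
exact: IHp (Hc _ _ Hv Hvy) Hp.
Qed.

Lemma comp_top (v : Tc) : top v -> [set x | connect (top_rel ltw) v x] = [set x | (x.1 == v.1) && top x].
Proof.
move=> Hv; apply/setP => x; rewrite !inE; apply/idP/idP.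
- apply: (connect_closed (S := fun x => (x.1 == v.1) && top x)); first by rewrite eqxx Hv.
  by move=> a b /andP [/eqP Ea _] /top_rel_char [E1 [_ Htb]]; rewrite -E1 Ea eqxx Htb.
- case/andP => /eqP E Hx; case: (eqVneq v x) => [->|Hne]; first exact: connect0.
  by apply: connect1; apply: top_rel_tops.
Qed.

Lemma comp_bot (v : Tc) : bot v -> [set x | connect (bot_rel ltw) v x] = [set x | (x.1 == v.1) && bot x].
Proof.
move=> Hv; apply/setP => x; rewrite !inE; apply/idP/idP.
- apply: (connect_closed (S := fun x => (x.1 == v.1) && bot x)); first by rewrite eqxx Hv.
  by move=> a b /andP [/eqP Ea _] /bot_rel_char [E1 [_ Htb]]; rewrite -E1 Ea eqxx Htb.
- case/andP => /eqP E Hx; case: (eqVneq v x) => [->|Hne]; first exact: connect0.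
  by apply: connect1; apply: bot_rel_bots.
Qed.

Lemma comp_ntop (v : Tc) : ~~ top v -> [set x | connect (top_rel ltw) v x] = [set v].
Proof.
move=> Hv; apply/setP => x; rewrite !inE; apply/idP/idP.
- apply: (connect_closed (S := fun x => x == v)); first by rewrite eqxx.
  move=> a b /eqP -> /top_rel_char [_ [Ht _]]; by move: Hv; rewrite Ht.
- move/eqP ->; exact: connect0.
Qed.

Lemma comp_nbot (v : Tc) : ~~ bot v -> [set x | connect (bot_rel ltw) v x] = [set v].
Proof.
move=> Hv; apply/setP => x; rewrite !inE; apply/idP/idP.
- apply: (connect_closed (S := fun x => x == v)); first by rewrite eqxx.
  move=> a b /eqP -> /bot_rel_char [_ [Ht _]]; by move: Hv; rewrite Ht.
- move/eqP ->; exact: connect0.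
Qed.

Lemma is_top_char (A : {set Tc}) : is_top ltw A -> exists2 a, top a & A = [set x | (x.1 == a.1) && top x].
Proof.
case/andP => Hc /existsP [a /eqP EA]; case Ha: (top a).
  by exists a => //; rewrite EA comp_top.
by move: Hc; rewrite EA comp_ntop ?Ha // cards1.
Qed.

Lemma is_bot_char (B : {set Tc}) : is_bot ltw B -> exists2 b, bot b & B = [set x | (x.1 == b.1) && bot x].
Proof.
case/andP => Hc /existsP [a /eqP EA]; case Ha: (bot a).
  by exists a => //; rewrite EA comp_bot.
by move: Hc; rewrite EA comp_nbot ?Ha // cards1.
Qed.


Definition part (k : 'I_(size w)) : {set Tc} := [set x : Tc | x.1 == k].

Definition o0 : 'I_4 := @Ordinal 4 0 isT.
Definition o1 : 'I_4 := @Ordinal 4 1 isT.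
Definition o2 : 'I_4 := @Ordinal 4 2 isT.
Definition o3 : 'I_4 := @Ordinal 4 3 isT.

Lemma part_tangle (k : 'I_(size w)) : isTl (wn w k) -> is_tangle ltw (part k).
Proof.
move=> Ht.
pose A := [set x : Tc | (x.1 == k) && top x]; pose B := [set x : Tc | (x.1 == k) && bot x].
apply/existsP; exists A; apply/existsP; exists B; apply/and4P; split.
- apply/andP; split.
    have : [set ((k, o0) : Tc); (k, o1)] \subset A by apply/subsetP => x; rewrite !inE => /orP [] /eqP ->; rewrite /top /= Ht eqxx.
    move/subset_leq_card; rewrite cards2 => H; apply: leq_trans H; by rewrite xpair_eqE eqxx.
  apply/existsP; exists (k, o0); rewrite comp_top; last by rewrite /top /= Ht.
  by [].
- apply/andP; split.
    have : [set ((k, o2) : Tc); (k, o3)] \subset B by apply/subsetP => x; rewrite !inE => /orP [] /eqP ->; rewrite /bot /= Ht eqxx.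
    move/subset_leq_card; rewrite cards2 => H; apply: leq_trans H; by rewrite xpair_eqE eqxx.
  apply/existsP; exists (k, o2); rewrite comp_bot; last by rewrite /bot /= Ht.
  by [].
- apply/existsP; exists (k, o0); apply/existsP; exists (k, o1); apply/existsP; exists (k, o2);
  apply/existsP; exists (k, o3).
  by rewrite !inE /top /bot /incomp !ltw_same //= /intra /= Ht !xpair_eqE !eqxx.
- apply/eqP/setP => x; rewrite !inE /top /bot; case: eqP => //= ->; rewrite Ht /=; lia.
Qed.

Lemma tangle_part X : is_tangle ltw X -> exists2 k : 'I_(size w), isTl (wn w k) & X = part k.
Proof.
case/existsP => A /existsP [B /and4P [HA HB Hm /eqP HX]].
case: (is_top_char HA) => a Ha EA; case: (is_bot_char HB) => b Hb EB.
case/existsP: Hm => a1 /existsP [a2 /existsP [b1 /existsP [b2 H]]].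
move: H => /and4P [Ha1 Ha2 Hb1 /and4P [Hb2 Hne _ /and4P [Hba1 _ _ /and3P [_ Hinc _]]]].
move: Ha1 Ha2 Hb1; rewrite EA EB !inE => /andP [/eqP E1 T1] /andP [/eqP E2 T2] /andP [/eqP E3 B1].
have Eab : b.1 = a.1.
  apply/eqP/negPn/negP => Hne'.
  have El : lev a1 = lev a2 by rewrite /lev (@idx_same a1 a2) ?T1 ?T2 // E1 E2.
  move: Hinc Hba1; rewrite /incomp /ltw E1 E2 E3 (negbTE Hne') El => /and3P [_ /negbTE -> _].
  by [].
exists a.1; first by move: Ha; rewrite /top => /andP [].
rewrite HX EA EB; apply/setP => x; rewrite !inE Eab /top /bot.
case: eqP => //= ->; move: Ha; rewrite /top => /andP [-> _] /=; lia.
Qed.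

Lemma in_tangle_T v : in_tangle ltw v = isTl (wn w v.1).
Proof.
apply/idP/idP.
- case/existsP => X /andP [/tangle_part [k Hk ->]]; by rewrite inE => /eqP ->.
- move=> Ht; apply/existsP; exists (part v.1); rewrite part_tangle //= inE eqxx //.
Qed.

Lemma has_lev_vertex r m : r < size w -> has_lev (wn w r) m -> exists z : Tc, (z.1 : nat) = r /\ lev z = m.
Proof.
move=> Hr; case E: (wn w r) => [i|i] /= H.
- exists (Ordinal Hr, o0); rewrite /lev /top /idx /= E /=; lia.
- case/orP: H => /eqP H.
  + exists (Ordinal Hr, o2); rewrite /lev /top /idx /= E /=; lia.
  + exists (Ordinal Hr, o0); rewrite /lev /top /idx /= E /=; lia.
Qed.

Lemma sep q : forall p i, p < q -> q < size w -> wn w p = Lc i -> wn w q = Lc i ->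
  exists r, [/\ p < r, r < q & has_lev (wn w r) i.-1 || has_lev (wn w r) i.+1].
Proof.
elim/ltn_ind: q => q IH p i Hpq Hq Hp Hqi.
case: (HI2 Hpq Hq Hp Hqi) => r [H1 H2 H3].
case E: (wn w r) H3 => [j|j] H3.
- case: (eqVneq j i) => [Eji|Hji].
  + subst j; case: (IH r H2 p i H1 ltac:(lia) Hp E) => r' [H1' H2' H3']; exists r'; split => //; lia.
  + exists r; split => //; rewrite E /=; move: H3; rewrite /=; lia.
- exists r; split => //; rewrite E /=; move: H3; rewrite /=; lia.
Qed.

Lemma letter_c (x : Tc) : ~~ isTl (wn w x.1) -> wn w x.1 = Lc (lev x).
Proof. rewrite /lev /top /idx; case: (wn w x.1) => //= i _; by rewrite addn0. Qed.

Lemma noclone (x y : Tc) : x.1 < y.1 -> ~~ isTl (wn w x.1) -> ~~ isTl (wn w y.1) -> lev x = lev y ->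
  ~~ clone ltw x y.
Proof.
move=> Hxy Hx Hy El.
have Ex := letter_c Hx; have Ey := letter_c Hy; rewrite -El in Ey.
have Htx : top x = false by rewrite /top (negbTE Hx).
have Hty : top y = false by rewrite /top (negbTE Hy).
case: (sep Hxy (ltn_ord _) Ex Ey) => r [H1 H2 H3].
have Hr : r < size w by have := ltn_ord y.1; lia.
have Hne1 (z : Tc) : (z.1 : nat) = r -> (z.1 == x.1) = false by move=> Ez; apply: ord_neq; lia.
have Hne2 (z : Tc) : (z.1 : nat) = r -> (z.1 == y.1) = false by move=> Ez; apply: ord_neq; lia.
have Hne3 (z : Tc) : (z.1 : nat) = r -> (x.1 == z.1) = false by move=> Ez; apply: ord_neq; lia.
have Hne4 (z : Tc) : (z.1 : nat) = r -> (y.1 == z.1) = false by move=> Ez; apply: ord_neq; lia.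
case/orP: H3 => /(has_lev_vertex Hr) [z [Ez Lz]]; apply/negP => /andP [/eqP ED /eqP EU].
- have Hz1 := idx_ge1 z; have Hx1 := idx_ge1 x.
  have Hlx : lev x = idx x by rewrite /lev Htx addn0.
  have := congr1 (fun S : {set Tc} => z \in S) ED; rewrite !inE /ltw Hne1 // Hne2 // Lz -El Ez.
  have -> : (r < y.1) = true by lia.
  have -> : (r < x.1) = false by lia.
  have -> : ((lev x).-1 + 2 <= lev x) = false by lia.
  have -> : ((lev x).-1 + 1 == lev x) = true by move: Lz; rewrite /lev; lia.
  by [].
- have Hx1 := idx_ge1 x.
  have := congr1 (fun S : {set Tc} => z \in S) EU; rewrite !inE /ltw Hne3 // Hne4 // Lz -El Ez.
  have -> : (x.1 < r) = true by lia.
  have -> : (y.1 < r) = false by lia.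
  have -> : (lev x + 2 <= (lev x).+1) = false by lia.
  by rewrite addn1 eqxx.
Qed.


Lemma cloneC (a b : Tc) : clone ltw a b = clone ltw b a.
Proof. by rewrite /clone eq_sym (eq_sym (Up ltw a)). Qed.

Lemma lev_nT (x : Tc) : ~~ isTl (wn w x.1) -> lev x = idx x.
Proof. by move=> H; rewrite /lev /top (negbTE H) addn0. Qed.

Lemma clone_char (v y : Tc) : ~~ isTl (wn w v.1) -> (~~ in_tangle ltw y && clone ltw v y) = (y.1 == v.1).
Proof.
move=> Hv; apply/idP/idP.
- case/andP; rewrite in_tangle_T => Hy Hc.
  have El : lev v = lev y := lev_level (clone_level ltw_so Hc).
  case: (ltngtP v.1 y.1) => H.
  + by move: Hc; rewrite (negbTE (noclone H Hv Hy El)).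
  + by move: Hc; rewrite cloneC (negbTE (noclone H Hy Hv (esym El))).
  + by apply/eqP; apply: val_inj.
- move/eqP => E; rewrite in_tangle_T E Hv /=.
  have Hy' : ~~ isTl (wn w y.1) by rewrite E.
  have El : lev v = lev y by rewrite (lev_nT Hv) (lev_nT Hy') (idx_same E).
  have Htv : ~~ top v by rewrite /top (negbTE Hv).
  have Hbv : ~~ bot v by rewrite /bot (negbTE Hv).
  by apply/andP; split; apply/eqP; [apply: Dn_eq|apply: Up_eq].
Qed.

Lemma part_inj : injective part.
Proof.
move=> k1 k2 E; have : ((k1, o0) : Tc) \in part k1 by rewrite inE.
by rewrite E inE => /eqP.
Qed.

Lemma part_is_part k : is_part ltw (part k).
Proof.
rewrite /is_part; case Ht: (isTl (wn w k)); first by rewrite part_tangle.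
apply/orP; right; apply/existsP; exists (k, o0).
rewrite in_tangle_T /= Ht /=; apply/eqP/setP => y; rewrite !inE clone_char /= ?Ht //.
Qed.

Lemma is_part_part X : is_part ltw X -> exists k, X = part k.
Proof.
case/orP => [/tangle_part [k _ ->]|]; first by exists k.
case/existsP => x /andP [Hx /eqP ->]; exists x.1; apply/setP => y.
rewrite !inE clone_char //; by rewrite -in_tangle_T.
Qed.

Lemma part_tangle_iff k : is_tangle ltw (part k) = isTl (wn w k).
Proof.
apply/idP/idP; last exact: part_tangle.
by case/tangle_part => k' Hk' /part_inj ->.
Qed.

Lemma part_letter_part k : part_letter ltw (part k) = wn w k.
Proof.
rewrite /part_letter (_ : \big[minn/_]_(x in part k) level ltw x = letter_index (wn w k)); last first.
  apply: (minlev_eq ltw_so (x0 := (k, o2))).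
  - by rewrite inE.
  - by rewrite level_ltw /lev /top /idx /= andbF addn0.
  - move=> x; rewrite inE level_ltw /lev /idx => /eqP ->; lia.
rewrite part_tangle_iff; by case: (wn w k).
Qed.

Definition slist : seq {set Tc} := [seq part k | k <- enum 'I_(size w)].

Lemma nth_slist i : i < size w -> exists k : 'I_(size w), (k : nat) = i /\ nth set0 slist i = part k.
Proof.
move=> Hi; exists (nth (Ordinal Hi) (enum 'I_(size w)) i); split; first by rewrite nth_enum_ord.
by rewrite /slist (nth_map (Ordinal Hi)) // size_enum_ord.
Qed.

Lemma slist_compatible : compatible_listing ltw slist.
Proof.
split.
- by rewrite /slist map_inj_uniq ?enum_uniq //; exact: part_inj.
- move=> X; apply/idP/idP.
  + case/mapP => k _ ->; exact: part_is_part.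
  + case/is_part_part => k ->; apply: map_f; by rewrite mem_enum.
- move=> i j a b; rewrite /slist size_map size_enum_ord => Hi Hj Hij.
  case: (nth_slist Hi) => ki [Eki ->]; case: (nth_slist Hj) => kj [Ekj ->].
  rewrite !inE => /eqP Ha /eqP Hb.
  rewrite !level_ltw /ltw Ha Hb; have -> : (ki == kj) = false by apply: ord_neq; lia.
  by rewrite Eki Ekj.
Qed.

Lemma slist_word : map (part_letter ltw) slist = w.
Proof.
apply: (@eq_from_nth _ d0); first by rewrite /slist size_map size_map size_enum_ord.
move=> i; rewrite /slist size_map size_map size_enum_ord => Hi.
rewrite (nth_map set0); last by rewrite /slist size_map size_enum_ord.
case: (nth_slist Hi) => k [Ek ->]; by rewrite part_letter_part Ek.
Qed.

Lemma Tc_inhabited : exists x : Tc, True.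
Proof. case: HI1 => Hs _; by exists (Ordinal Hs, o0). Qed.

End Construct.

Unset Implicit Arguments.

Theorem theorem3p11 (w : seq letter) (hw : all valid_letter w) :
  (exists (T : finType) (lt : rel T),
     [/\ strict_order lt, 0 < #|T|, free31 lt & skeleton_is lt w]) <->
  ((forall w', word_equiv w w' -> starts_c1_or_t12 w') /\
   (forall w', word_equiv w w' -> ~ has_factor_cici w')).
Proof.
split.
- case=> T [lt [Hso Hpos Hf [s [Hs Heq]]]].
  have HI : I1 w /\ I2 w.
    apply/(equiv_I Heq); split; [exact: listing_I1 | exact: listing_I2].
  have HI' w' : word_equiv w w' -> starts_c1_or_t12 w' /\ ~ has_factor_cici w'.
    move=> Hw'; case: ((equiv_I Hw').1 HI) => H1 H2; exact: I_conds.
  by split => w' /HI' [].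
- case=> C1 C2.
  have HI1 := conds_I1 C1; have HI2 := conds_I2 C2.
  exists (Datatypes_prod__canonical__fintype_Finite (fintype_ordinal__canonical__fintype_Finite (size w)) (fintype_ordinal__canonical__fintype_Finite 4)).
  exists (@ltw w); split.
  + exact: ltw_so.
  + apply/card_gt0P; case: (Tc_inhabited HI1) => x _; by exists x.
  + exact: ltw_free.
  + exists (slist w); split; first exact: slist_compatible.
    rewrite slist_word //; exact: rst_refl.
Qed.
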